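(* Every weakly-reversible chemical reaction network that is not catalytic is persistent.
   Context: A chemical reaction network (CRN) consists of positive integers $s,n$, a finite directed graph $G$ with vertex set $\{1,\dots,n\}$ and edge set $E(G)$, and an injective labeling of vertex $i$ by a monic monomial $\psi_i(x)=\prod_{j=1}^s x_j^{y_{ij}}$; let $Y=(y_{ij})$ be the $n\times s$ exponent matrix and $\psi(x)=(\psi_1(x),\dots,\psi_n(x))$. $G$ is weakly-reversible iff each connected component is strongly connected. A mass action system is a CRN with a weight function $k:E(G)\to\mathbb{R}_{>0}$; its dynamics are $\frac{dx}{dt}=\psi(x)\,A_k\,Y$, where $A_k$ is the $n\times n$ matrix with $(i,j)$ entry $k(i,j)$ for $(i,j)\in E(G)$, $i\ne j$, $0$ for other off-diagonal entries, and diagonal chosen so that all row sums are zero. The omega-limit set of $x:\mathbb{R}_{\ge0}\to\mathbb{R}^s$ is the set of $y\in\mathbb{R}^s$ for which there is an increasing sequence $t_m\to\infty$ with $x(t_m)\to y$. The CRN is persistent iff for every $k:E(G)\to\mathbb{R}_{>0}$ and every solution $x:\mathbb{R}_{\ge0}\to\mathbb{R}^s_{>0}$ of the associated dynamics, the omega-limit set of $x$ does not meet the boundary $\partial\mathbb{R}^s_{\ge0}$. The event-graph $\overline{G}$ has as vertices all monic monomials in $x_1,\dots,x_s$, with an edge $(N\psi_i,N\psi_j)$ for each $(i,j)\in E(G)$ and each monic monomial $N$. A weakly-reversible CRN is catalytic iff there exist monic monomials $M,N$ path-connected in $\overline{G}$ such that $M/\gcd(M,N)$ and $N/\gcd(M,N)$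 are not path-connected in $\overline{G}$. *)

(* Defs.v *)
From HB Require Import structures.
From mathcomp Require Import all_boot all_order all_algebra.
From mathcomp Require Import all_classical all_reals all_analysis.
From mathcomp Require Import Rstruct Rstruct_topology.
From Stdlib Require Import Relations.

Set Implicit Arguments.
Unset Strict Implicit.
Unset Printing Implicit Defensive.

Import Order.TTheory GRing.Theory Num.Theory numFieldNormedType.Exports.
Local Open Scope classical_set_scope.
Local Open Scope ring_scope.
Notation R := Rdefinitions.R.

(* A CRN on s species and n vertices is given by:
   - a directed graph  E : rel 'I_n  on the vertex set {0,..,n-1},
   - the exponent vectors  Y i : {ffun 'I_s -> nat}  (row i of the matrix Y),
     i.e. vertex i is labelled by the monic monomial  psi_i(x) = prod_l x_l^(Y i l).
   Monic monomials in x_1..x_s are identified with their exponent vectors. *)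
Definition monomial (s : nat) := {ffun 'I_s -> nat}.

Definition weakly_reversible (n : nat) (E : rel 'I_n) : Prop :=
  forall i j : 'I_n, connect [rel a b | E a b || E b a] i j -> connect E i j.

Definition psi (s n : nat) (Y : 'I_n -> monomial s) (x : 'I_s -> R) (i : 'I_n) : R :=
  \prod_(l < s) x l ^+ Y i l.

Definition offdiag (n : nat) (E : rel 'I_n) (k : 'I_n -> 'I_n -> R) (i j : 'I_n) : R :=
  if E i j then k i j else 0.

Definition Ak (n : nat) (E : rel 'I_n) (k : 'I_n -> 'I_n -> R) : 'M[R]_n :=
  \matrix_(i, j) (if i == j then - \sum_(j' < n | j' != i) offdiag E k i j'
                  else offdiag E k i j).

Definition Ymx (s n : nat) (Y : 'I_n -> monomial s) : 'M[R]_(n, s) :=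
  \matrix_(i, l) (Y i l)%:R.

Definition mass_action_rhs (s n : nat) (E : rel 'I_n) (Y : 'I_n -> monomial s)
  (k : 'I_n -> 'I_n -> R) (x : 'I_s -> R) : 'rV[R]_s :=
  (\row_i psi Y x i) *m Ak E k *m Ymx Y.

(* x solves dx/dt = psi(x) A_k Y (for all t > 0; behaviour at the single
   time t = 0 does not affect the omega-limit set). *)
Definition is_solution (s n : nat) (E : rel 'I_n) (Y : 'I_n -> monomial s)
  (k : 'I_n -> 'I_n -> R) (x : R -> 'I_s -> R) : Prop :=
  forall t : R, 0 < t -> forall l : 'I_s,
    is_derive (t : R^o) (1 : R^o) (fun u : R^o => x u l : R^o) (mass_action_rhs E Y k (x t) 0 l).

Definition omega_limit (s : nat) (x : R -> 'I_s -> R) (y : 'I_s -> R) : Prop :=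
  exists tm : nat -> R,
    (forall m, tm m < tm m.+1) /\
    (tm m @[m --> \oo] --> +oo) /\
    (forall l : 'I_s, (x (tm m) l) @[m --> \oo] --> y l).

Definition boundary_orthant (s : nat) (y : 'I_s -> R) : Prop :=
  (forall l, 0 <= y l) /\ (exists l, y l = 0).

Definition persistent (s n : nat) (E : rel 'I_n) (Y : 'I_n -> monomial s) : Prop :=
  forall k : 'I_n -> 'I_n -> R, (forall i j, E i j -> 0 < k i j) ->
  forall x : R -> 'I_s -> R,
    is_solution E Y k x ->
    (forall t : R, 0 <= t -> forall l, 0 < x t l) ->
    ~ (exists y, omega_limit x y /\ boundary_orthant y).

Definition event_edge (s n : nat) (E : rel 'I_n) (Y : 'I_n -> monomial s)
  (u v : monomial s) : Prop :=
  exists (i j : 'I_n) (N : monomial s),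
    E i j /\ u = [ffun l => (N l + Y i l)%N] /\ v = [ffun l => (N l + Y j l)%N].

Definition event_connected (s n : nat) (E : rel 'I_n) (Y : 'I_n -> monomial s) :
  monomial s -> monomial s -> Prop :=
  clos_refl_trans (monomial s) (event_edge E Y).

Definition mono_gcd (s : nat) (M N : monomial s) : monomial s :=
  [ffun l => minn (M l) (N l)].

(* M / D for a monomial D dividing M *)
Definition mono_div (s : nat) (M D : monomial s) : monomial s :=
  [ffun l => (M l - D l)%N].

Definition catalytic (s n : nat) (E : rel 'I_n) (Y : 'I_n -> monomial s) : Prop :=
  exists M N : monomial s,
    event_connected E Y M N /\
    ~ event_connected E Y (mono_div M (mono_gcd M N)) (mono_div N (mono_gcd M N)).

(* Main.v *)
Require Import Defs.
From HB Require Import structures.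
From mathcomp Require Import all_boot all_order all_algebra.
From mathcomp Require Import all_classical all_reals all_analysis.
From mathcomp Require Import Rstruct Rstruct_topology.
From mathcomp Require Import ring lra.
From Stdlib Require Import Relations Classical.

Module Aux.
Set Implicit Arguments.
Unset Strict Implicit.
Unset Printing Implicit Defensive.
Import Order.TTheory GRing.Theory Num.Theory numFieldNormedType.Exports.
Local Open Scope classical_set_scope.
Local Open Scope ring_scope.


Section S2.
Variables (s n : nat) (E : rel 'I_n) (Y : 'I_n -> monomial s) (k : 'I_n -> 'I_n -> R).

Definition offd (i j : 'I_n) : R := if i == j then 0 else offdiag E k i j.

Lemma sum_offd (i : 'I_n) (f : 'I_n -> R) :
  \sum_j offd i j * f j = \sum_(j < n | j != i) offdiag E k i j * f j.
Proof.
rewrite (bigD1 i) //= /offd eqxx mul0r add0r.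
by apply: eq_bigr => j ji; rewrite eq_sym (negbTE ji).
Qed.

Lemma rowAY (w : 'rV[R]_n) l : ((w *m Ak E k) *m Ymx Y) 0 l =
  \sum_i \sum_j w 0 i * offd i j * ((Y j l)%:R - (Y i l)%:R).
Proof.
rewrite mxE; under eq_bigr do rewrite !mxE mulr_suml.
rewrite exchange_big /=; apply: eq_bigr => i _.
under eq_bigr do rewrite mxE -mulrA.
under [RHS]eq_bigr do rewrite -mulrA.
rewrite -!mulr_sumr; congr (_ * _).
rewrite sum_offd (bigD1 i) //= eqxx.
under [in RHS]eq_bigr do rewrite mulrBr.
rewrite sumrB -mulr_suml mulNr addrC; congr (_ - _).
by apply: eq_bigr => j ji; rewrite eq_sym (negbTE ji).
Qed.
End S2.


Section Comb.
Variables (s n : nat) (E : rel 'I_n) (Y : 'I_n -> monomial s).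

Definition addm (A B : monomial s) : monomial s := [ffun l => (A l + B l)%N].

Lemma edge_shift A B C : event_edge E Y A B -> event_edge E Y (addm A C) (addm B C).
Proof.
move=> [i [j [N [eij [-> ->]]]]]; exists i, j, (addm N C); split=> //.
by split; apply/ffunP => l; rewrite !ffunE addnAC.
Qed.

Lemma conn_shift A B C : event_connected E Y A B ->
  event_connected E Y (addm A C) (addm B C).
Proof.
elim=> [A' B' h|A'|A' B' C' _ h1 _ h2].
- by apply: rt_step; apply: edge_shift.
- exact: rt_refl.
- exact: rt_trans h1 h2.
Qed.

Lemma conn_E a b : connect E a b -> event_connected E Y (Y a) (Y b).
Proof.
move=> /connectP [p]; elim: p a => [|c p IH] a /=.
  by move=> _ ->; apply: rt_refl.
move=> /andP[eac pp] lb; apply: rt_trans (IH c pp lb).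
apply: rt_step; exists a, c, [ffun=> 0%N]; split=> //.
by split; apply/ffunP => l; rewrite !ffunE.
Qed.

Definition reachable (v : 'I_s -> int) := exists P Q : monomial s,
  event_connected E Y P Q /\ forall l, (Q l)%:Z - (P l)%:Z = v l.

Lemma reach_ext v w : (forall l, v l = w l) -> reachable v -> reachable w.
Proof. by move=> e [P [Q [h1 h2]]]; exists P, Q; split=> // l; rewrite h2 e. Qed.

Lemma reach0 : reachable (fun=> 0).
Proof. by exists [ffun=> 0%N], [ffun=> 0%N]; split; [apply: rt_refl|move=> l; rewrite subrr]. Qed.

Lemma reach_add v w : reachable v -> reachable w -> reachable (fun l => v l + w l).
Proof.
move=> [P [Q [h1 h2]]] [P' [Q' [h1' h2']]].
exists (addm P P'), (addm Q Q'); split.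
  apply: rt_trans (conn_shift P' h1) _.
  have e1 : forall A B : monomial s, addm A B = addm B A.
    by move=> A B; apply/ffunP => l; rewrite !ffunE addnC.
  by rewrite (e1 Q P') (e1 Q Q'); apply: conn_shift.
by move=> l; rewrite !ffunE -h2 -h2' !PoszD opprD addrACA.
Qed.

Lemma reach_muln v m : reachable v -> reachable (fun l => v l *+ m).
Proof.
move=> h; elim: m => [|m IH].
  by apply: reach_ext reach0 => l; rewrite mulr0n.
by apply: reach_ext (reach_add h IH) => l; rewrite mulrS.
Qed.

Lemma reach_sum (I : Type) (r : seq I) (f : I -> 'I_s -> int) :
  (forall i, reachable (f i)) -> reachable (fun l => \sum_(i <- r) f i l).
Proof.
move=> h; elim: r => [|i r IH].
  by apply: reach_ext reach0 => l; rewrite big_nil.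
by apply: reach_ext (reach_add (h i) IH) => l; rewrite big_cons.
Qed.

Hypothesis WR : weakly_reversible E.

Lemma reach_edge i j (z : int) : E i j ->
  reachable (fun l => z * ((Y j l)%:Z - (Y i l)%:Z)).
Proof.
move=> eij.
have h1 : reachable (fun l => (Y j l)%:Z - (Y i l)%:Z).
  exists (Y i), (Y j); split=> //; apply: rt_step; exists i, j, [ffun=> 0%N].
  by split=> //; split; apply/ffunP => l; rewrite !ffunE.
have h2 : reachable (fun l => (Y i l)%:Z - (Y j l)%:Z).
  exists (Y j), (Y i); split=> //; apply: conn_E; apply: WR.
  by apply: connect1 => /=; rewrite eij orbT.
case: z => m.
  by apply: reach_ext (reach_muln m h1) => l; rewrite -mulr_natl natz.
apply: reach_ext (reach_muln m.+1 h2) => l.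
by rewrite NegzE -mulr_natl natz mulNr -mulrN opprB.
Qed.

Variable Z : 'I_s -> Prop.
Hypothesis siph : forall i j, E i j -> (forall m, Z m -> Y i m = 0%N) ->
  forall m, Z m -> Y j m = 0%N.

Lemma free_conn A B : event_connected E Y A B ->
  (forall m, Z m -> A m = 0%N) -> forall m, Z m -> B m = 0%N.
Proof.
elim=> [A' B' h|A'|A' B' C' _ h1 _ h2] //; last by move=> hA; apply: h2; apply: h1.
move: h => [i [j [N [eij [-> ->]]]]] hA m Zm.
have hN : forall m, Z m -> N m = 0%N.
  by move=> m' Zm'; have := hA m' Zm'; rewrite ffunE => /eqP; rewrite addn_eq0 => /andP[/eqP].
have hi : forall m, Z m -> Y i m = 0%N.
  by move=> m' Zm'; have := hA m' Zm'; rewrite ffunE => /eqP; rewrite addn_eq0 => /andP[_ /eqP].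
by rewrite ffunE hN // (siph eij hi Zm).
Qed.

Lemma comb_contra (ncat : ~ catalytic E Y) (l0 : 'I_s) (Zl0 : Z l0)
  (z : 'I_n -> 'I_n -> int) (hz : forall i j, z i j != 0 -> E i j)
  (hpos : forall l, Z l -> 0 < \sum_i \sum_j z i j * ((Y j l)%:Z - (Y i l)%:Z)) : False.
Proof.
have : reachable (fun l => \sum_i \sum_j z i j * ((Y j l)%:Z - (Y i l)%:Z)).
  apply: reach_sum => i; apply: reach_sum => j.
  have [z0|/hz eij] := eqVneq (z i j) 0; last exact: reach_edge.
  by apply: reach_ext reach0 => l; rewrite z0 mul0r.
move=> [P [Q [hPQ hv]]]; apply: ncat; exists P, Q; split=> // hD.
have hlt : forall l, Z l -> (P l < Q l)%N.
  by move=> l Zl; have := hpos l Zl; rewrite -hv subr_gt0 ltz_nat.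
have hfree : forall m, Z m -> mono_div P (mono_gcd P Q) m = 0%N.
  by move=> m Zm; rewrite !ffunE (minn_idPl (ltnW (hlt m Zm))) subnn.
have := free_conn hD hfree Zl0.
rewrite !ffunE (minn_idPl (ltnW (hlt l0 Zl0))) => /eqP.
by rewrite subn_eq0 leqNgt hlt.
Qed.
End Comb.


Lemma floor_term (K a dd : R) :
  K * a * dd - `|dd| <= (Num.floor (K * a))%:~R * dd.
Proof.
have h1 := floor_le (K * a); have h2 := floorD1_gt (K * a).
rewrite intrD in h2.
set f := (Num.floor (K * a))%:~R in h1 h2 *.
have [d0|d0] := leP 0 dd.
  rewrite ger0_norm //; nra.
rewrite ltr0_norm //; nra.
Qed.

Section Approx.
Variables (s n : nat) (Z : 'I_s -> Prop) (d : 'I_n -> 'I_n -> 'I_s -> int)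
  (a : 'I_n -> 'I_n -> R).
Hypothesis h : forall l, Z l -> 0 < \sum_i \sum_j a i j * (d i j l)%:~R.

Lemma approx_int : exists z : 'I_n -> 'I_n -> int,
  (forall i j, a i j = 0 -> z i j = 0) /\
  forall l, Z l -> 0 < \sum_i \sum_j z i j * d i j l.
Proof.
pose p l := \sum_i \sum_j a i j * (d i j l)%:~R.
pose B := \sum_l \sum_i \sum_j `|(d i j l)%:~R : R|.
pose K := \sum_l (if 0 < p l then (B + 1) / p l else 0).
have B0 : 0 <= B by apply: sumr_ge0 => l _; apply: sumr_ge0 => i _; apply: sumr_ge0.
exists (fun i j => Num.floor (K * a i j)); split.
  by move=> i j ->; rewrite mulr0 floor0.
move=> l Zl; have pl := h Zl; rewrite -(ltr0z R) rmorph_sum /=.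
have hK : (B + 1) / p l <= K.
  rewrite /K (bigD1 l) //= -/(p l) pl lerDl; apply: sumr_ge0 => m _.
  by case: ifP => // pm; apply: divr_ge0 => //; [lra|exact: ltW].
have hKp : B + 1 <= K * p l.
  by rewrite -ler_pdivrMr // mulrC.
have hBl : \sum_i \sum_j `|(d i j l)%:~R : R| <= B.
  rewrite /B (bigD1 l) //= lerDl; apply: sumr_ge0 => m _.
  by apply: sumr_ge0 => i _; apply: sumr_ge0.
apply: (@lt_le_trans _ _ (K * p l - \sum_i \sum_j `|(d i j l)%:~R : R|)).
  lra.
rewrite /p mulr_sumr -sumrB; apply: ler_sum => i _.
rewrite rmorph_sum mulr_sumr -sumrB; apply: ler_sum => j _.
by rewrite rmorphM /= mulrA; apply: floor_term.
Qed.
End Approx.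


Lemma cvg_sumR (I : Type) (r : seq I)
  (f : I -> nat -> R) (a : I -> R) :
  (forall i, f i t @[t --> \oo] --> a i) ->
  (fun t => \sum_(i <- r) f i t) @ \oo --> \sum_(i <- r) a i.
Proof.
move=> h; elim: r => [|i r IH].
  rewrite big_nil; under eq_cvg do rewrite big_nil; exact: cvg_cst.
rewrite big_cons; under eq_cvg do rewrite big_cons.
have H := @cvgD R R^o _ \oo _ _ _ _ _ (h i) IH. exact: H.
Qed.

Lemma ev2 (P Q : nat -> Prop) : (\forall m \near \oo, P m) ->
  (\forall m \near \oo, Q m) -> exists m, P m /\ Q m.
Proof. by move=> hP hQ; have := filterI hP hQ; move=> /(_ _)/filter_ex. Qed.

Lemma lim_uniqR (u : nat -> R) (a b : R) : u n @[n --> \oo] --> a -> u n @[n --> \oo] --> b -> a = b.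
Proof.
move=> ha hb; apply/eqP; rewrite -subr_eq0; apply/negPn/negP => hne.
have e0 : 0 < `|a - b| / 2 by rewrite divr_gt0 // normr_gt0.
have {ha}ha := proj1 (@cvgrPdist_lt R R^o _ _ _ u a) ha _ e0; have {hb}hb := proj1 (@cvgrPdist_lt R R^o _ _ _ u b) hb _ e0.
have [m [h1 h2]] := ev2 (ha _) (hb _).
have := ler_normD (a - u m) (u m - b); rewrite subrKA (distrC (u m)).
have : `|a - b| / 2 + `|a - b| / 2 = `|a - b| by rewrite -splitr.
move: h1 h2; set A := `|a - b|; set B1 := `|a - u m|; set B2 := `|b - u m|.
lra.
Qed.

Lemma MVT_pos (f df : R -> R) a b : 0 < a -> a < b ->
  (forall u : R, 0 < u -> is_derive (u : R^o) (1 : R^o) (f : R^o -> R^o) (df u)) ->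
  exists2 c, c \in `]a, b[ & f b - f a = df c * (b - a).
Proof.
move=> a0 ab hd; apply: MVT => //.
  move=> c; rewrite in_itv /= => /andP[ac _]; apply: hd; exact: lt_trans ac.
apply: derivable_within_continuous => c; rewrite in_itv /= => /andP[ac _].
have h := hd c (lt_le_trans a0 ac).
exact: (@ex_derive _ _ _ _ _ _ _ h).
Qed.

Section S5.
Variables (s n : nat) (E : rel 'I_n) (Y : 'I_n -> monomial s) (k : 'I_n -> 'I_n -> R).
Variable x : R -> 'I_s -> R.
Hypothesis hsol : is_solution E Y k x.
Notation F := (fun z m => mass_action_rhs E Y k z 0 m).

Lemma g_derive (c : 'I_s -> R) t : 0 < t ->
  is_derive (t : R^o) (1 : R^o) (fun u : R^o => \sum_m c m * x u m : R^o) (\sum_m c m * F (x t) m).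
Proof.
move=> t0.
have H := @is_derive_sum _ R^o R^o s (fun m => c m \*: (fun u : R^o => x u m : R^o)) t 1
   _ (fun m => is_deriveZ (c m) (hsol t0 m)).
have -> : (fun u : R^o => \sum_m c m * x u m : R^o) = \sum_(m < s) (c m \*: (fun u : R^o => x u m : R^o)).
  by apply: funext => u; rewrite fct_sumE.
exact: H.
Qed.

Lemma g_const (c : 'I_s -> R) (hc : forall t, 0 < t -> \sum_m c m * F (x t) m = 0) a b :
  0 < a -> 0 < b -> \sum_m c m * x a m = \sum_m c m * x b m.
Proof.
wlog ab : a b / a <= b.
  move=> W a0 b0; have [ab|ba] := leP a b; first exact: W.
  by apply/esym/W => //; exact: ltW.
move=> a0 b0; move: ab; rewrite le_eqVlt => /orP[/eqP->//|ab].
have [c0 c0ab] := @MVT_pos (fun u => \sum_m c m * x u m) (fun u => \sum_m c m * F (x u) m) a b a0 ab (fun u u0 => g_derive c u0).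
rewrite hc ?mul0r => [/eqP|]; first by rewrite subr_eq0 => /eqP.
move: c0ab; rewrite in_itv /= => /andP[ac _]; exact: lt_trans ac.
Qed.

Lemma linalg (tm : nat -> R) (y : 'I_s -> R)
  (htm : tm m @[m --> \oo] --> +oo) (hy : forall l, x (tm m) l @[m --> \oo] --> y l) :
  exists c : 'rV_n, \row_l (x 1 l - y l) = c *m (Ak E k *m Ymx Y).
Proof.
set M := Ak E k *m Ymx Y; set C := cokermx M.
have hF : forall t j, \sum_m C m j * F (x t) m = 0.
  move=> t j; have MC : M *m C = 0 := mulmx_coker M.
  transitivity ((mass_action_rhs E Y k (x t) *m C) 0 j).
    by rewrite mxE; apply: eq_bigr => m _; rewrite mulrC.
  by rewrite /mass_action_rhs -(mulmxA _ (Ak E k)) -/M -mulmxA MC mulmx0 mxE.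
have hconst : forall j b, 0 < b -> \sum_m C m j * x b m = \sum_m C m j * x 1 m.
  by move=> j b b0; apply: g_const => // t _; apply: hF.
have hlim : forall j, \sum_m C m j * x 1 m = \sum_m C m j * y m.
  move=> j.
  have h1 : (fun m => \sum_l C l j * x (tm m) l) @ \oo --> \sum_m C m j * x 1 m.
    apply: cvg_near_cst.
    move/cvgryPgt: htm => /(_ 0); apply: filterS => m tm0.
    exact: hconst.
  have h2 : (fun m => \sum_l C l j * x (tm m) l) @ \oo --> \sum_m C m j * y m.
    apply: cvg_sumR => l; apply: cvgM; [exact: cvg_cst|exact: hy].
  exact: (lim_uniqR h1 h2).
have H0 : \row_l (x 1 l - y l) *m C = 0.
  apply/matrixP => i j; rewrite !mxE.
  under eq_bigr do rewrite mxE mulrBl.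
  rewrite sumrB.
  have e : forall f : 'I_s -> R, \sum_m f m * C m j = \sum_m C m j * f m.
    by move=> f; apply: eq_bigr => m _; rewrite mulrC.
  by rewrite (e (fun m => x 1 m)) (e y) hlim subrr.
have : (\row_l (x 1 l - y l) <= M)%MS by rewrite submxE H0.
by move/submxP.
Qed.
End S5.


Lemma harm_small (eps : R) : 0 < eps -> \forall n \near \oo, (n.+1%:R : R)^-1 < eps.
Proof.
move=> e0; have := cvgr_lt _ (@cvg_harmonic R) _ e0.
by move=> /(_ _) h.
Qed.

Lemma ev1 (P : nat -> Prop) : (\forall m \near \oo, P m) -> exists m, P m.
Proof. by move=> h; exact: (filter_ex h). Qed.

Lemma cvg_prodR (I : Type) (r : seq I) (f : I -> nat -> R) (a : I -> R) :
  (forall i, f i t @[t --> \oo] --> a i) ->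
  (fun t => \prod_(i <- r) f i t) @ \oo --> \prod_(i <- r) a i.
Proof.
move=> h; elim: r => [|i r IH].
  rewrite big_nil; under eq_cvg do rewrite big_nil; exact: cvg_cst.
rewrite big_cons; under eq_cvg do rewrite big_cons.
by apply: cvgM; [exact: h|exact: IH].
Qed.

Lemma cvg_powR (f : nat -> R) (a : R) e :
  f t @[t --> \oo] --> a -> (fun t => f t ^+ e) @ \oo --> a ^+ e.
Proof.
move=> h; elim: e => [|e IH].
  rewrite expr0; under eq_cvg do rewrite expr0; exact: cvg_cst.
rewrite exprS; under eq_cvg do rewrite exprS.
by apply: cvgM.
Qed.

Lemma seq_cont_nbhs (s : nat) (G : ('I_s -> R) -> R) (z : 'I_s -> R) :
  (forall u : nat -> 'I_s -> R, (forall l, u n l @[n --> \oo] --> z l) ->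
     G (u n) @[n --> \oo] --> G z) ->
  forall e, 0 < e -> exists2 r, 0 < r &
    forall w, (forall l, `|w l - z l| < r) -> `|G w - G z| < e.
Proof.
move=> hc e e0; apply: NNPP => H.
have hw : forall n : nat, exists w : 'I_s -> R,
    (forall l, `|w l - z l| < (n.+1%:R)^-1) /\ e <= `|G w - G z|.
  move=> n; apply: NNPP => H2; apply: H; exists (n.+1%:R)^-1 => // w hw.
  rewrite ltNge; apply/negP => hge; apply: H2; by exists w.
have [u hu] := boolp.choice hw.
have hcv : forall l, u n l @[n --> \oo] --> z l.
  move=> l; apply/(@cvgrPdist_lt R R^o) => eps eps0.
  apply: filterS (harm_small eps0) => n hn.
  rewrite distrC; exact: lt_trans (proj1 (hu n) l) hn.
have := hc u hcv; move/(@cvgrPdist_lt R R^o) => /(_ e e0) hev.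
have [n hn] := ev1 hev.
by move: (proj2 (hu n)); rewrite distrC leNgt hn.
Qed.

Lemma cvg_absR (u : nat -> R) (a : R) : u t @[t --> \oo] --> a -> `|u t| @[t --> \oo] --> `|a|.
Proof. move=> h; exact: (@cvg_norm R R^o _ _ _ _ _ h). Qed.

Lemma cvg_subcR (u : nat -> R) (a c : R) : u t @[t --> \oo] --> a -> (u t - c) @[t --> \oo] --> a - c.
Proof. move=> h; exact: (@cvgB R R^o _ _ _ u (fun=> c) a c h (cvg_cst c)). Qed.

Lemma cvg_squeezeR (u : nat -> R) (a : R) :
  (forall p, `|a - u p| < (p.+1%:R)^-1) -> u t @[t --> \oo] --> a.
Proof.
move=> h; apply/(@cvgrPdist_lt R R^o) => eps eps0.
apply: filterS (harm_small eps0) => p hp.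
exact: lt_trans (h p) hp.
Qed.


Section Dyn.
Variables (s n : nat) (E : rel 'I_n) (Y : 'I_n -> monomial s) (k : 'I_n -> 'I_n -> R).
Notation F := (fun z m => mass_action_rhs E Y k z 0 m).

Lemma Fexp z m : F z m =
  \sum_i \sum_j psi Y z i * offd E k i j * ((Y j m)%:R - (Y i m)%:R).
Proof. by rewrite /mass_action_rhs rowAY; under eq_bigr do under eq_bigr do rewrite mxE. Qed.

Lemma F_cont (u : nat -> 'I_s -> R) (z : 'I_s -> R) m :
  (forall l, u t l @[t --> \oo] --> z l) -> F (u t) m @[t --> \oo] --> F z m.
Proof.
move=> hu /=; rewrite Fexp; under eq_cvg do rewrite Fexp.
apply: cvg_sumR => i; apply: cvg_sumR => j.
apply: cvgM; last exact: cvg_cst.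
apply: cvgM; last exact: cvg_cst.
rewrite /psi; apply: cvg_prodR => l; exact: cvg_powR.
Qed.

Hypothesis hk : forall i j, E i j -> 0 < k i j.

Lemma offd_ge0 i j : 0 <= offd E k i j.
Proof.
rewrite /offd /offdiag; case: ifP => // _; case: ifP => // eij.
exact/ltW/hk.
Qed.

Variable x : R -> 'I_s -> R.
Hypothesis hsol : is_solution E Y k x.
Lemma sol_cont t l : 0 < t -> {for t, continuous (fun u : R^o => x u l : R^o)}.
Proof.
move=> t0; have h := hsol t0 l.
apply/differentiable_continuous; rewrite -derivable1_diffP.
exact: (@ex_derive _ _ _ _ _ _ _ h).
Qed.

Lemma sol_MVT a b l : 0 < a -> a < b ->
  exists2 c, c \in `]a, b[ & x b l - x a l = F (x c) l * (b - a).
Proof.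
move=> a0 ab; apply: (@MVT R (fun u => x u l) (fun c => F (x c) l)) => //.
  move=> c cab; apply: hsol.
  by apply: lt_trans a0 _; move: cab; rewrite in_itv /= => /andP[].
apply: derivable_within_continuous => c; rewrite in_itv /= => /andP[ac _].
have h := hsol (lt_le_trans a0 ac) l.
exact: (@ex_derive _ _ _ _ _ _ _ h).
Qed.

Hypothesis hpos : forall t, 0 <= t -> forall l, 0 < x t l.
Variables (tm : nat -> R) (y : 'I_s -> R).
Hypothesis htm : tm m @[m --> \oo] --> +oo.
Hypothesis hy : forall l, x (tm m) l @[m --> \oo] --> y l.

Lemma tm_pos (A : R) : \forall m \near \oo, A < tm m.
Proof. by move/cvgryPgt: htm; apply. Qed.

Lemma y_ge0 l : 0 <= y l.
Proof.
rewrite leNgt; apply/negP => hl.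
have hyl := @hy l; have h1 := cvgr_lt _ hyl _ hl.
have [m [m1 m2]] := ev2 (h1 _) (tm_pos 0).
by have := hpos (ltW m2) l; rewrite ltNge (ltW m1).
Qed.

Lemma psi_ge0 z i : (forall l, 0 <= z l) -> 0 <= psi Y z i.
Proof. by move=> h; apply: prodr_ge0 => l _; apply: exprn_ge0. Qed.

Variables (i0 j0 : 'I_n) (l0 : 'I_s).
Hypothesis e0 : E i0 j0.
Hypothesis free0 : forall m, y m = 0 -> Y i0 m = 0%N.
Hypothesis yl0 : y l0 = 0.
Hypothesis Yj0 : (0 < Y j0 l0)%N.

Lemma Fy_pos : 0 < F y l0.
Proof.
rewrite /= Fexp.
set T := fun i j => psi Y y i * offd E k i j * ((Y j l0)%:R - (Y i l0)%:R).
have Tge0 : forall i j, 0 <= T i j.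
  move=> i j; rewrite /T.
  have [Yi0|Yi0] := eqVneq (Y i l0) 0%N.
    rewrite Yi0 subr0; apply: mulr_ge0 => //.
    by apply: mulr_ge0; [apply: psi_ge0; exact: y_ge0|exact: offd_ge0].
  rewrite /psi (bigD1 l0) //= yl0 expr0n (negbTE Yi0) /=.
  by rewrite !mul0r.
have Tpos : 0 < T i0 j0.
  have hi0 : Y i0 l0 = 0%N by exact: free0.
  have ij : i0 != j0 by apply/eqP => eij; move: Yj0; rewrite -eij hi0.
  rewrite /T hi0 subr0; apply: mulr_gt0; last by rewrite ltr0n.
  apply: mulr_gt0; last by rewrite /offd (negbTE ij) /offdiag e0; exact: hk.
  apply: prodr_gt0 => m _.
  have [ym0|ym0] := eqVneq (y m) 0.
    by rewrite (free0 ym0) expr0.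
  by apply: exprn_gt0; rewrite lt_neqAle eq_sym ym0 y_ge0.
rewrite (bigD1 i0) //= (bigD1 j0) //= -/(T i0 j0).
apply: (lt_le_trans Tpos); rewrite -addrA lerDl; apply: addr_ge0.
  by apply: sumr_ge0 => j _; apply: Tge0.
by apply: sumr_ge0 => i _; apply: sumr_ge0 => j _; apply: Tge0.
Qed.

Lemma term_le_sum (f : 'I_s -> R) m : (forall m, 0 <= f m) -> f m <= \sum_m f m.
Proof.
move=> h; rewrite (bigD1 m) //= lerDl; apply: sumr_ge0 => j _; exact: h.
Qed.

Lemma nbhd_F : exists2 r, 0 < r & forall w, (forall l, `|w l - y l| < r) ->
  F y l0 / 2 < F w l0 /\ forall m, `|F w m| <= \sum_m `|F y m| + 1.
Proof.
set G := fun w : 'I_s -> R => \sum_m `|F w m - F y m|.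
have hG : forall u : nat -> 'I_s -> R, (forall l, u t l @[t --> \oo] --> y l) ->
    G (u t) @[t --> \oo] --> G y.
  move=> u hu; rewrite /G; apply: cvg_sumR => m.
  by apply: cvg_absR; apply: cvg_subcR; exact: F_cont.
have Fp := Fy_pos.
have ep : 0 < Num.min (F y l0 / 2) 1 by rewrite lt_min ltr01 andbT divr_gt0.
have [r r0 hr] := seq_cont_nbhs hG ep.
exists r => // w hw; have := hr w hw.
have -> : G y = 0 by rewrite /G big1 // => m _; rewrite subrr normr0.
rewrite subr0 ger0_norm; last by apply: sumr_ge0.
rewrite lt_min => /andP[h1 h2].
have hterm : forall m, `|F w m - F y m| <= G w.
  by move=> m; apply: (@term_le_sum (fun m => `|F w m - F y m|)).
split.
  have := hterm l0; rewrite ler_norml => /andP[h3 _]; lra.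
move=> m; have := hterm m => h4.
have h5 : `|F w m| <= `|F y m| + `|F w m - F y m|.
  by rewrite -[X in `|X|](subrK (F y m)) addrC ler_normD.
have := @term_le_sum (fun m => `|F y m|) m (fun m => normr_ge0 _).
lra.
Qed.

Definition Dst t := \sum_m `|x t m - y m|.

Lemma Dst_coord t l : `|x t l - y l| <= Dst t.
Proof. exact: (@term_le_sum (fun m => `|x t m - y m|)). Qed.


Lemma stay (r V a b : R) : 0 < r -> 0 < a -> a <= b ->
  (forall t, 0 < t -> Dst t < r -> forall m, `|F (x t) m| <= V) ->
  Dst b < r / 2 -> s%:R * V * (b - a) <= r / 4 ->
  forall t, a <= t -> t <= b -> Dst t < r.
Proof.
move=> r0 a0 ab hV hb hsmall t ta tb; rewrite ltNge; apply/negP => hrt.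
set A := [set u | (a <= u) /\ (u <= b) /\ (r <= Dst u)].
have hA : has_sup A.
  split; first by exists t.
  by exists b => u [_ [ub _]].
set ts := sup A.
have t_ts : t <= ts by apply: sup_upper_bound => //.
have ts_b : ts <= b by apply: ge_sup; [exists t|move=> u [_ [ub _]]].
have ts0 : 0 < ts by apply: (lt_le_trans a0); exact: le_trans ta t_ts.
have hw : forall p : nat, exists u, A u /\ ts - (p.+1%:R)^-1 < u.
  move=> p; have pp : 0 < (p.+1%:R : R)^-1 by rewrite invr_gt0 ltr0Sn.
  have [u Au hu] := sup_adherent pp hA.
  by exists u.
have [su hsu] := boolp.choice hw.
have su_cv : su t @[t --> \oo] --> ts.
  apply: cvg_squeezeR => p.
  have [[_ [_ _]] h2] := hsu p.
  have h3 : su p <= ts by apply: sup_upper_bound => //; exact: (hsu p).1.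
  rewrite ger0_norm; last by rewrite subr_ge0.
  by rewrite ltrBlDr addrC -ltrBlDr.
have xcv : forall m, x (su t) m @[t --> \oo] --> x ts m.
  move=> m; apply: (cvg_comp su (fun u => x u m) su_cv).
  exact: sol_cont.
have Dcv : Dst (su t) @[t --> \oo] --> Dst ts.
  apply: cvg_sumR => m; apply: cvg_absR; apply: cvg_subcR; exact: xcv.
have Dts : r <= Dst ts.
  rewrite leNgt; apply/negP => h.
  have [p hp] := ev1 (cvgr_lt _ Dcv _ h).
  by have [[_ [_ h4]] _] := hsu p; move: hp; rewrite ltNge h4.
have ts_lt_b : ts < b.
  rewrite lt_neqAle ts_b andbT; apply/eqP => tsb; move: Dts; rewrite tsb.
  lra.
have hnear : forall u, ts < u -> u <= b -> Dst u < r.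
  move=> u tsu ub; rewrite ltNge; apply/negP => hu.
  have : u <= ts by apply: sup_upper_bound => //; split; [lra|split].
  lra.
have V0 : 0 <= V.
  apply: le_trans (hV b _ _ l0); [exact: normr_ge0|exact: lt_le_trans ab|lra].
have hm : forall m, `|x b m - x ts m| <= V * (b - a).
  move=> m; have [xi xi_in hxi] := sol_MVT m ts0 ts_lt_b.
  move: xi_in; rewrite in_itv /= => /andP[h1 h2].
  rewrite hxi normrM (@ger0_norm _ (b - ts)); last by rewrite subr_ge0; exact: ltW.
  apply: (@le_trans _ _ (V * (b - ts))).
    apply: ler_wpM2r; first by rewrite subr_ge0; exact: ltW.
    apply: hV; [exact: lt_trans h1|exact: hnear (ltW h2)].
  apply: ler_wpM2l => //; rewrite lerD2l lerN2; exact: le_trans ta t_ts.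
have : Dst ts <= Dst b + s%:R * (V * (b - a)).
  have -> : s%:R * (V * (b - a)) = \sum_(m < s) (V * (b - a)).
    by rewrite sumr_const card_ord mulr_natl.
  rewrite /Dst -big_split /=.
  apply: ler_sum => m _.
  have := ler_normD (x ts m - x b m) (x b m - y m).
  rewrite addrA subrK (distrC (x ts m) (x b m)).
  have := hm m; lra.
lra.
Qed.


Lemma ev3 (P Q W : nat -> Prop) : (\forall m \near \oo, P m) ->
  (\forall m \near \oo, Q m) -> (\forall m \near \oo, W m) -> exists m, [/\ P m, Q m & W m].
Proof.
move=> hP hQ hW; have [m [h1 h2]] := ev2 hP (filterI hQ hW).
by case: h2 => h2 h3; exists m.
Qed.

Lemma dyn_false : False.
Proof.
have [r r0 hr] := nbhd_F.
set c := F y l0 / 2; set V := \sum_m `|F y m| + 1.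
have c0 : 0 < c by rewrite /c divr_gt0 // Fy_pos.
have V0 : 0 < V by rewrite /V ltr_wpDl // sumr_ge0 // => m _.
have s0 : 0 < s%:R :> R by rewrite ltr0n; exact: leq_ltn_trans (leq0n l0) (ltn_ord l0).
set tau := r / (4 * (s%:R * V)).
have tau0 : 0 < tau by rewrite /tau divr_gt0 // mulr_gt0 // mulr_gt0.
have hD : Dst (tm m) @[m --> \oo] --> (0 : R).
  have h := @cvg_sumR _ (index_enum 'I_s) (fun l m => `|x (tm m) l - y l|) (fun l => `|y l - y l|)
    (fun l => cvg_absR (cvg_subcR (c := y l) (@hy l))).
  have e : \sum_(l <- index_enum 'I_s) `|y l - y l| = 0.
    by rewrite big1 // => l _; rewrite subrr normr0.
  by move: h; rewrite e.
have r2 : 0 < r / 2 by rewrite divr_gt0.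
have ct : y l0 < c * tau by rewrite yl0 mulr_gt0.
have [m [hm1 hm2 hm3]] := ev3 (tm_pos tau) (cvgr_lt _ hD _ r2) (cvgr_lt _ (@hy l0) _ ct).
set b := tm m in hm1 hm2 hm3; set a := b - tau.
have a0 : 0 < a by rewrite /a subr_gt0.
have ab : a < b by rewrite /a ltrBlDr ltrDl.
have hV : forall t, 0 < t -> Dst t < r -> forall m, `|F (x t) m| <= V.
  move=> t t0 ht; exact: (hr (x t) (fun l => le_lt_trans (Dst_coord t l) ht)).2.
have hsmall : s%:R * V * (b - a) <= r / 4.
  rewrite /a opprB addrC subrK /tau.
  rewrite le_eqVlt; apply/orP; left; apply/eqP; field.
  by rewrite !gt_eqF.
have st := stay r0 a0 (ltW ab) hV hm2 hsmall.
have [xi xi_in hxi] := sol_MVT l0 a0 ab.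
move: xi_in; rewrite in_itv /= => /andP[h1 h2].
have hDxi : Dst xi < r by apply: st; apply: ltW.
have hxi' : c < F (x xi) l0.
  exact: (hr (x xi) (fun l => le_lt_trans (Dst_coord xi l) hDxi)).1.
have hxa := hpos (ltW a0) l0.
have : c * tau < F (x xi) l0 * tau by rewrite ltr_pM2r.
have eba : b - a = tau by rewrite /a opprB addrC subrK.
rewrite eba in hxi.
move: hxi hm3 hxa; rewrite -/b; clearbody a b.
lra.
Qed.
End Dyn.


Theorem corollary4p2_aux (s n : nat) (hs : (0 < s)%N) (hn : (0 < n)%N)
  (E : rel 'I_n) (Y : 'I_n -> monomial s) (hY : injective Y) :
  weakly_reversible E -> ~ catalytic E Y -> persistent E Y.
Proof.
move=> WR ncat k hk x hsol hpos [y [[tm [_ [htm hy]]] [yge [l0 yl0]]]].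
have siph : forall i j, E i j -> (forall m, y m = 0 -> Y i m = 0%N) ->
    forall m, y m = 0 -> Y j m = 0%N.
  move=> i j eij hfree m ym; apply/eqP; rewrite -leqn0 leqNgt; apply/negP => hp.
  exact: (dyn_false hk hsol hpos htm hy eij hfree ym hp).
have [c hc] := linalg hsol htm hy.
pose a := fun i j => c 0 i * offd E k i j.
pose d := fun i j l => (Y j l)%:Z - (Y i l)%:Z.
have hp : forall l, y l = 0 -> 0 < \sum_i \sum_j a i j * (d i j l)%:~R.
  move=> l yl.
  have e1 : \sum_i \sum_j a i j * (d i j l)%:~R = (c *m (Ak E k *m Ymx Y)) 0 l.
    rewrite mulmxA rowAY; apply: eq_bigr => i _; apply: eq_bigr => j _.
    by rewrite /a /d rmorphB /=.
  rewrite e1 -hc mxE yl subr0; exact: hpos.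
have [z [hz1 hz2]] := approx_int hp.
apply: (comb_contra WR siph ncat yl0 (z := z)) => //.
move=> i j; apply: contraR => nE; apply/eqP; apply: hz1.
rewrite /a /offd /offdiag (negbTE nE); case: ifP => _; by rewrite mulr0.
Qed.

End Aux.

Theorem corollary4p2 (s n : nat) (hs : (0 < s)%N) (hn : (0 < n)%N)
  (E : rel 'I_n) (Y : 'I_n -> monomial s) (hY : injective Y) :
  weakly_reversible E -> ~ catalytic E Y -> persistent E Y.
Proof. exact: (@Aux.corollary4p2_aux s n hs hn E Y hY). Qed.
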